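(* Let $\mathtt{type}\in\{\mathrm{lin},\log\}$. There exist an input dimension $d$, a set $\mathcal{X}$ of input sequences, and a target $\mathbf{H}$ of the form $\mathbf{H}_t(\boldsymbol{X})=f(\boldsymbol{x}_t,\boldsymbol{x}_{t-g(\boldsymbol{x}_t)})$ belonging to the class $\mathcal{H}^{\mathrm{Adap}}_{(1,1)}$, such that: (A) for every $\epsilon>0$ there exist $H\in\mathbb{N}_+$ and a one-layer, $H$-head normalization-free attention model $\mathbf{Attn}^{\mathrm{DP}}$ with $\mathtt{type}$-RPE with $|||\mathbf{H}-\mathbf{Attn}^{\mathrm{DP}}|||\le\epsilon$; (B) for every $H\in\mathbb{N}_+$ and every one-layer, $H$-head dot-product-free attention model $\mathbf{Attn}^{\mathrm{DPF}}$ with $\mathtt{type}$-RPE, $|||\mathbf{H}-\mathbf{Attn}^{\mathrm{DPF}}|||\ge\frac23$.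
   Context: Input sequences $\boldsymbol{X}=(\boldsymbol{x}_t)_{t\in\mathbb{Z}}$, $\boldsymbol{x}_t\in\mathbb{R}^d$, range over a set $\mathcal{X}$ whose elements satisfy $\|\boldsymbol{x}_t\|_2\le1$. $|||\mathbf{G}|||=\sup_{t\in\mathbb{Z}}\sup_{\boldsymbol{X}\in\mathcal{X}}|\mathbf{G}_t(\boldsymbol{X})|$ for $\mathbf{G}_t:\mathcal{X}\to\mathbb{R}$. $\sigma(z)=\max\{z,0\}$. Barron space $\mathcal{B}$: continuous $f:\mathbb{R}^k\to\mathbb{R}$ with $f(\boldsymbol{x})=\int a\sigma(\boldsymbol{b}^\top\boldsymbol{x}+c)\rho(da,d\boldsymbol{b},dc)$ for a probability measure $\rho$ and $\|f\|_{\mathcal{B}}=\inf_\rho\mathbb{E}_\rho[|a|(\|\boldsymbol{b}\|_1+|c|)]<\infty$; $\mathrm{Lip}$ = Lipschitz functions. The class $\mathcal{H}^{\mathrm{Adap}}_{(1,1)}$: targets $\mathbf{H}_t(\boldsymbol{X})=f(\boldsymbol{x}_t,\boldsymbol{x}_{t-g(\boldsymbol{x}_t)})$ where $f\in\mathcal{B}\cap\mathrm{Lip}$, $g\in\mathcal{B}$, and there is an integer $T$ with $g(\boldsymbol{x})\in\{1,\dots,T\}$ for every token $\boldsymbol{x}$ of every $\boldsymbol{X}\in\mathcal{X}$. RPE: $\phi_{\log}(z)=-\log z$ ($z\ge1$), $-\infty$ otherwise; $\phi_{\mathrm{lin}}(z)=-z$ ($z\ge0$), $-\infty$ otherwise;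 $e^{-\infty}=0$. A one-layer, $H$-head normalization-free attention model with $\mathtt{type}$-RPE (embedding dimension $D$): $\boldsymbol{x}^{(0)}_t=\boldsymbol{W}_E\boldsymbol{x}_t+\boldsymbol{b}_E\in\mathbb{R}^D$ and $$\mathbf{Attn}_t(\boldsymbol{X})=\boldsymbol{W}_O\sum_{h=1}^H\boldsymbol{W}_V^{(h)}\sum_{s=0}^\infty\boldsymbol{x}^{(0)}_{t-s}\exp\big(\langle\boldsymbol{W}_Q^{(h)}\boldsymbol{x}^{(0)}_t,\boldsymbol{W}_K^{(h)}\boldsymbol{x}^{(0)}_{t-s}\rangle+p^{(h)}\phi_{\mathtt{type}}(s)\big)\in\mathbb{R},$$ with $\boldsymbol{W}_O\in\mathbb{R}^{1\times D}$, $\boldsymbol{W}_V^{(h)}\in\mathbb{R}^{D\times D}$, $\boldsymbol{W}_Q^{(h)},\boldsymbol{W}_K^{(h)}$ matrices with $D$ columns and equal numbers of rows, $p^{(h)}>0$. A dot-product-free attention model is one of this form with $\boldsymbol{W}_Q^{(h)}=\boldsymbol{W}_K^{(h)}=\mathbf{0}$ for all $h$. *)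

(* Defs.v *)
From HB Require Import structures.
From mathcomp Require Import all_boot all_order all_algebra.
From mathcomp Require Import all_classical all_reals all_analysis.
Unset Printing Implicit Defensive.
Import Order.TTheory GRing.Theory Num.Theory.
Import numFieldNormedType.Exports.
Local Open Scope classical_set_scope.
Local Open Scope ring_scope.

Section Defs.
Variable R : realType.

Definition relu (z : R) : R := Num.max z 0.

Definition norm2 {k : nat} (x : 'cV[R]_k) : R := Num.sqrt (\sum_i (x i 0) ^+ 2).

(* Barron space on R^k, with the mixing probability measure rho given as the
   law of random parameters (a, b, c) defined on some probability space. *)
Definition barron {k : nat} (f : 'cV[R]_k -> R) : Prop :=
  continuous f /\
  exists (dT : measure_display) (T : measurableType dT) (P : probability T R)
         (a : T -> R) (b : 'I_k -> T -> R) (c : T -> R),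
    measurable_fun setT a /\ (forall i, measurable_fun setT (b i)) /\
    measurable_fun setT c /\
    (\int[P]_w (`|a w| * (\sum_i `|b i w| + `|c w|))%:E < +oo)%E /\
    forall x : 'cV[R]_k,
      (f x)%:E = (\int[P]_w (a w * relu (\sum_i b i w * x i 0 + c w))%:E)%E.

Definition lipschitz {k : nat} (f : 'cV[R]_k -> R) : Prop :=
  exists L : R, forall x y, `|f x - f y| <= L * norm2 (x - y).

Definition input_set {d : nat} (Xs : set (int -> 'cV[R]_d)) : Prop :=
  forall X, Xs X -> forall t, norm2 (X t) <= 1.

Definition adap11 {d : nat} (Xs : set (int -> 'cV[R]_d))
    (H : int -> (int -> 'cV[R]_d) -> R) : Prop :=
  exists (f : 'cV[R]_(d + d) -> R) (g : 'cV[R]_d -> R) (T : nat),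
    barron f /\ lipschitz f /\ barron g /\
    forall X, Xs X -> forall t, exists n : nat,
      (1 <= n <= T)%N /\ g (X t) = n%:R /\
      H t X = f (col_mx (X t) (X (t - n%:Z)%R)).

Inductive rpe_type := RPE_lin | RPE_log.

(* exp (p * phi_type s), with the convention e^{-oo} = 0 *)
Definition rpe_weight (ty : rpe_type) (p : R) (s : nat) : R :=
  match ty with
  | RPE_lin => expR (p * - s%:R)
  | RPE_log => if (1 <= s)%N then expR (p * - ln s%:R) else 0
  end.

Set Implicit Arguments.
Record attn_model (d H : nat) := AttnModel {
  am_D : nat;
  am_WE : 'M[R]_(am_D, d);
  am_bE : 'cV[R]_am_D;
  am_WO : 'M[R]_(1, am_D);
  am_WV : 'I_H -> 'M[R]_am_D;
  am_r : 'I_H -> nat;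
  am_WQ : forall h : 'I_H, 'M[R]_(am_r h, am_D);
  am_WK : forall h : 'I_H, 'M[R]_(am_r h, am_D);
  am_p : 'I_H -> R;
  am_p_pos : forall h, 0 < am_p h }.
Unset Implicit Arguments.

Definition dot_product_free {d H : nat} (M : attn_model d H) : Prop :=
  forall h, am_WQ M h = 0 /\ am_WK M h = 0.

Variables (d H : nat).

Definition embed (M : attn_model d H) (X : int -> 'cV[R]_d) (u : int)
  : 'cV[R]_(am_D M) := am_WE M *m X u + am_bE M.


Definition attn_term (ty : rpe_type) (M : attn_model d H) (h : 'I_H)
    (t : int) (X : int -> 'cV[R]_d) (j : 'I_(am_D M)) (s : nat) : R :=
  let xt := embed M X t in
  let xs := embed M X (t - s%:Z)%R in
  (xs j 0) *
  expR (\sum_i ((am_WQ M h *m xt) i 0 * (am_WK M h *m xs) i 0)) *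
  rpe_weight ty (am_p M h) s.


Definition attn_defined (ty : rpe_type) (M : attn_model d H)
    (Xs : set (int -> 'cV[R]_d)) : Prop :=
  forall X, Xs X -> forall t h j, cvgn (series (attn_term ty M h t X j)).

Definition attn_out (ty : rpe_type) (M : attn_model d H)
    (t : int) (X : int -> 'cV[R]_d) : R :=
  (am_WO M *m \sum_h (am_WV M h *m
      \col_j limn (series (attn_term ty M h t X j)))) 0 0.

Definition sup_err (ty : rpe_type) (M : attn_model d H)
    (Xs : set (int -> 'cV[R]_d)) (Htgt : int -> (int -> 'cV[R]_d) -> R)
  : \bar R :=
  ereal_sup [set (`|Htgt t X - attn_out ty M t X|)%:E | t in [set: int] & X in Xs].

End Defs.

Arguments input_set {R d}.
Arguments adap11 {R d}.
Arguments dot_product_free {R d H}.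
Arguments attn_defined {R d H}.
Arguments attn_out {R d H}.
Arguments sup_err {R d H}.
Arguments attn_term {R d H}.
Arguments embed {R d H}.
Arguments barron {R k}.
Arguments lipschitz {R k}.
Arguments norm2 {R k}.
Arguments rpe_weight {R}.
Arguments relu {R}.

(* Main.v *)
Require Import Defs.
From HB Require Import structures.
From mathcomp Require Import all_boot all_order all_algebra.
From mathcomp Require Import all_classical all_reals all_analysis.
From mathcomp Require Import ring lra zify.
Import Order.TTheory GRing.Theory Num.Theory.
Import numFieldNormedType.Exports.
Local Open Scope classical_set_scope.
Local Open Scope ring_scope.


Lemma cont_sum (R : realType) k (F : 'I_k -> 'cV[R]_k -> R) :
  (forall i, continuous (F i)) -> continuous (fun x => \sum_i F i x).
Proof.
move=> cF x.
suff: forall s : seq 'I_k, {for x, continuous (fun x => \sum_(i <- s) F i x)}.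
  by apply.
elim=> [|i s IH].
  rewrite (_ : (fun x => _) = fun _ => 0); first exact: cst_continuous.
  by apply: funext => y; rewrite big_nil.
rewrite (_ : (fun x => _) = (F i \+ fun x => \sum_(j <- s) F j x)).
  exact: (continuousD (cF i x) IH).
by apply: funext => y; rewrite big_cons.
Qed.

Lemma barron_neuron (R : realType) k (a0 c0 : R) (b0 : 'I_k -> R) :
  barron (fun x : 'cV[R]_k => a0 * relu (\sum_i b0 i * x i 0 + c0)).
Proof.
split.
  move=> x.
  have hs : {for x, continuous (fun y : 'cV[R]_k => \sum_i b0 i * y i 0)}.
    apply: cont_sum => i y.
    have := (@continuousM R _ (fun _ => b0 i) (fun x : 'cV[R]_k => x i 0) y).
    move=> /(_ (@cst_continuous _ _ _ _)).
    move=> /(_ (@coord_continuous R k 1 i 0 y)).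
    exact.
  have hc : {for x, continuous (fun y : 'cV[R]_k => \sum_i b0 i * y i 0 + c0)}.
    exact: (@continuousD R R _ _ (fun _ => c0) x hs (@cst_continuous _ _ _ _)).
  have hm : {for x, continuous (fun y : 'cV[R]_k => relu (\sum_i b0 i * y i 0 + c0))}.
    exact: (@continuous_max R _ _ (fun _ => 0) x hc (@cst_continuous _ _ _ _)).
  exact: (@continuousM R _ (fun _ => a0) _ x (@cst_continuous _ _ _ _) hm).
have [P _] : exists P : probability R R, True by exists \d_(0:R).
exists _, R, P, (fun _ => a0), (fun i _ => b0 i), (fun _ => c0).
split; first exact: measurable_cst.
split; first by move=> i; exact: measurable_cst.
split; first exact: measurable_cst.
split.
  rewrite integral_cst //; rewrite (_ : _ [set: _] = 1%E); [by rewrite mule1 ltry | exact: probability_setT].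
move=> x; rewrite integral_cst //; rewrite (_ : _ [set: _] = 1%E); [by rewrite mule1 | exact: probability_setT].
Qed.

Lemma series_ev0 (R : realType) (u : nat -> R) N :
  (forall s, (N <= s)%N -> u s = 0) -> series u @ \oo --> \sum_(s < N) u s.
Proof.
move=> u0; apply: cvg_near_cst; exists N => // n /= Nn.
rewrite /series /= (big_cat_nat (leq0n N) Nn) /= big_mkord.
rewrite [X in _ + X]big_nat_cond [X in _ + X]big1 ?addr0 // => i /andP[/andP[Ni _] _]; exact: u0.
Qed.

Lemma limn_ev0 (R : realType) (u : nat -> R) N :
  (forall s, (N <= s)%N -> u s = 0) -> limn (series u) = \sum_(s < N) u s.
Proof. by move=> u0; apply: cvg_lim => //; exact: series_ev0. Qed.

Lemma delta_mulE (R : realType) m n (i : 'I_m) (k : 'I_n) (x : 'M[R]_(n,1)) :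
  (delta_mx i k *m x) i 0 = x k 0.
Proof.
rewrite mxE (bigD1 k) //= big1 ?addr0 => [|l /negbTE lk]; rewrite mxE ?eqxx ?lk /=.
  by rewrite mul1r.
by rewrite ?andbF mul0r.
Qed.

Lemma relu_lip (R : realType) (a b : R) : `|relu a - relu b| <= `|a - b|.
Proof.
rewrite /relu.
have H : forall x y : R, Num.max x 0 - Num.max y 0 <= `|x - y|.
  move=> x y; rewrite lerBlDr ge_max; apply/andP; split.
    rewrite -{1}(subrK y x); apply: lerD; first exact: ler_norm.
    by rewrite le_max lexx.
  by apply: addr_ge0 => //; rewrite le_max lexx orbT.
rewrite ler_norml H andbT lerNl opprB distrC; exact: H.
Qed.

Definition xv (R : realType) (b1 b2 : bool) (t : int) (i : nat) : R :=
  if t == 0 then (if i == 0%N then 1/2 else if i == 2%N then (if b1 then 1/2 else 0) else 0)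
  else if t == 1 then (if b2 && (i == 1%N) then 1 else 0) else 0.

Definition mkX (R : realType) b1 b2 : int -> 'cV[R]_3 :=
  fun t => \col_(i < 3) xv R b1 b2 t i.

Definition Xs (R : realType) : set (int -> 'cV[R]_3) :=
  [set X | exists b1 b2, X = mkX R b1 b2].

Definition fb (i : 'I_(3 + 3)) : nat := if (val i == 1%N) || (val i == 5%N) then 1%N else 0%N.

Definition ftgt (R : realType) (z : 'cV[R]_(3 + 3)) : R :=
  6 * relu (\sum_i (fb i)%:R * z i 0 + (-1)).

Definition Htgt (R : realType) (t : int) (X : int -> 'cV[R]_3) : R :=
  ftgt R (col_mx (X t) (X (t - 1))).

Lemma ftgtE (R : realType) (u v : 'cV[R]_3) :
  ftgt R (col_mx u v) = 6 * relu (u (@Ordinal 3 1 isT) 0 + v (@Ordinal 3 2 isT) 0 - 1).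
Proof.
rewrite /ftgt big_split_ord /=.
rewrite !big_ord_recl !big_ord0 !col_mxEu !col_mxEd /fb /=.
congr (_ * relu _).
have -> : lift ord0 ord0 = @Ordinal 3 1 isT by apply: val_inj.
have -> : lift ord0 (lift ord0 ord0) = @Ordinal 3 2 isT by apply: val_inj.
rewrite !mul0r !mul1r !add0r !addr0 //.
Qed.

Lemma norm2_ge (R : realType) k (w : 'cV[R]_k) i : `|w i 0| <= norm2 w.
Proof.
rewrite /norm2 -sqrtr_sqr ler_sqrt; last by apply: sumr_ge0 => j _; exact: sqr_ge0.
by rewrite (bigD1 i) //= lerDl; apply: sumr_ge0 => j _; exact: sqr_ge0.
Qed.

Lemma Xs_input (R : realType) : input_set (Xs R).
Proof.
move=> X [b1 [b2 ->]] t; rewrite /norm2 -sqrtr1 ler_sqrt // !big_ord_recl big_ord0 !mxE /xv /=.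
case: (t == 0); case: (t == 1); case: b1; case: b2 => /=; lra.
Qed.

Lemma relu_ge0 (R : realType) (a : R) : 0 <= a -> relu a = a.
Proof. by move=> h; rewrite /relu max_l. Qed.

Lemma relu_le0 (R : realType) (a : R) : a <= 0 -> relu a = 0.
Proof. by move=> h; rewrite /relu max_r. Qed.

Lemma ftgt_lip (R : realType) : Defs.lipschitz (ftgt R).
Proof.
exists 36 => x y; rewrite /ftgt -mulrBr normrM ger0_norm //.
rewrite (_ : 36 = 6 * 6); last by lra.
rewrite -mulrA ler_pM2l //; apply: le_trans (relu_lip _ _ _) _.
rewrite opprD addrACA subrr addr0 -sumrB.
apply: le_trans (ler_norm_sum _ _ _) _.
apply: le_trans (_ : \sum_(i < 3 + 3) norm2 (x - y) <= _); last first.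
  by rewrite sumr_const card_ord mulr_natl.
apply: ler_sum => i _; rewrite -mulrBr normrM.
have := norm2_ge _ _ (x - y) i; rewrite !mxE => h.
rewrite /fb; case: ifP => _; first by rewrite normr1 mul1r.
by rewrite normr0 mul0r; apply: le_trans h; exact: normr_ge0.
Qed.

Lemma Xs_adap (R : realType) : adap11 (Xs R) (Htgt R).
Proof.
exists (ftgt R), (fun _ => 1), 1%N; split; first exact: barron_neuron.
split; first exact: ftgt_lip.
split.
  have -> : (fun _ : 'cV[R]_3 => 1) = (fun x => 1 * relu (\sum_i 0 * x i 0 + 1)).
    apply: funext => x; rewrite big1 => [|i _]; last by rewrite mul0r.
    by rewrite add0r relu_ge0 ?mul1r.
  exact: barron_neuron.
by move=> X _ t; exists 1%N.
Qed.

Lemma zmod_id (R : realType) n (a b c e : 'cV[R]_n) :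
  a + b - c + e = (a + e) + (b + e) - (c + e).
Proof. by apply/matrixP => i j; rewrite !mxE; ring. Qed.

Lemma mkX_lin (R : realType) u :
  mkX R true true u = mkX R false true u + mkX R true false u - mkX R false false u.
Proof.
apply/matrixP => i j; rewrite !mxE /xv.
case: (u == 0); case: (u == 1); case: (nat_of_ord i == 0%N);
  case: (nat_of_ord i == 2%N); case: (nat_of_ord i == 1%N) => /=; lra.
Qed.

Lemma Htgt_vals (R : realType) :
  [/\ Htgt R 1 (mkX R true true) = 3, Htgt R 1 (mkX R false true) = 0,
      Htgt R 1 (mkX R true false) = 0 & Htgt R 1 (mkX R false false) = 0].
Proof.
rewrite /Htgt !ftgtE !mxE /xv subrr /=.
split.
- rewrite relu_ge0; lra.
- rewrite relu_le0; lra.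
- rewrite relu_le0; lra.
- rewrite relu_le0; lra.
Qed.

Lemma lim_series_lin (R : realType) (u1 u2 u3 u4 : nat -> R) :
  (forall s, u1 s = u2 s + u3 s - u4 s) ->
  cvgn (series u2) -> cvgn (series u3) -> cvgn (series u4) ->
  limn (series u1) = limn (series u2) + limn (series u3) - limn (series u4).
Proof.
move=> e c2 c3 c4.
have -> : series u1 = (fun n => series u2 n + series u3 n - series u4 n).
  apply: funext => n; rewrite /series /= -big_split -sumrB /=.
  by apply: eq_bigr => s _; rewrite e.
apply: cvg_lim => //; apply: cvgB; first apply: cvgD.
- exact: c2.
- exact: c3.
- exact: c4.
Qed.

Lemma col_lin (R : realType) n (f1 f2 f3 f4 : 'I_n -> R) :
  (forall j, f1 j = f2 j + f3 j - f4 j) ->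
  \col_j f1 j = \col_j f2 j + \col_j f3 j - \col_j f4 j.
Proof. by move=> e; apply/matrixP => i k; rewrite !mxE e. Qed.

Lemma out_lin (R : realType) H D (WO : 'M[R]_(1, D)) (WV : 'I_H -> 'M[R]_D)
    (c1 c2 c3 c4 : 'I_H -> 'cV[R]_D) :
  (forall h, c1 h = c2 h + c3 h - c4 h) ->
  (WO *m \sum_h (WV h *m c1 h)) 0 0 =
  (WO *m \sum_h (WV h *m c2 h)) 0 0 + (WO *m \sum_h (WV h *m c3 h)) 0 0
  - (WO *m \sum_h (WV h *m c4 h)) 0 0.
Proof.
move=> e; under eq_bigr do rewrite e mulmxDr mulmxN mulmxDr.
rewrite sumrB big_split /= mulmxDr mulmxN mulmxDr.
by move: (WO *m _) (WO *m _) (WO *m _) => a b c; rewrite !mxE.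
Qed.

Lemma fin_ineq (R : realType) (o2 o3 o4 : R) :
  - (2/3) < 0 - o2 -> 0 - o2 < 2/3 -> - (2/3) < 0 - o3 -> 0 - o3 < 2/3 ->
  - (2/3) < 0 - o4 -> 0 - o4 < 2/3 -> 2/3 <= 3 - (o2 + o3 - o4).
Proof. move=> *; lra. Qed.

Lemma dpf_bound (R : realType) ty H (M : attn_model R 3 H) :
  dot_product_free M -> attn_defined ty M (Xs R) ->
  ((2 / 3 : R)%:E <= sup_err ty M (Xs R) (Htgt R))%E.
Proof.
move=> dpf def.
set X1 := mkX R true true; set X2 := mkX R false true.
set X3 := mkX R true false; set X4 := mkX R false false.
have hX : forall u, X1 u = X2 u + X3 u - X4 u by move=> u; exact: mkX_lin.
have m1 : Xs R X1 by exists true, true.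
have m2 : Xs R X2 by exists false, true.
have m3 : Xs R X3 by exists true, false.
have m4 : Xs R X4 by exists false, false.
have [v1 v2 v3 v4] : [/\ Htgt R 1 X1 = 3, Htgt R 1 X2 = 0,
  Htgt R 1 X3 = 0 & Htgt R 1 X4 = 0] by exact: Htgt_vals.
clearbody X1 X2 X3 X4.
have hterm : forall h j X s, attn_term ty M h 1 X j s =
    (embed M X (1 - s%:Z)) j 0 * rpe_weight ty (am_p M h) s.
  move=> h j X s; rewrite /attn_term; have [-> ->] := dpf h.
  rewrite !mul0mx big1 => [|i _]; first by rewrite expR0 mulr1.
  by rewrite mxE mul0r.
have hemb : forall u, embed M X1 u = embed M X2 u + embed M X3 u - embed M X4 u.
  by move=> u; rewrite /embed hX !mulmxDr mulmxN zmod_id.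
have hser : forall h j, limn (series (attn_term ty M h 1 X1 j)) =
    limn (series (attn_term ty M h 1 X2 j)) + limn (series (attn_term ty M h 1 X3 j))
    - limn (series (attn_term ty M h 1 X4 j)).
  move=> h j.
  apply: lim_series_lin; last first.
  - exact: def X4 m4 1 h j.
  - exact: def X3 m3 1 h j.
  - exact: def X2 m2 1 h j.
  move=> s; rewrite !hterm hemb.
  move: (embed M X2 _) (embed M X3 _) (embed M X4 _) => a b c.
  by rewrite !mxE mulrBl mulrDl.
have hout : attn_out ty M 1 X1 = attn_out ty M 1 X2 + attn_out ty M 1 X3 - attn_out ty M 1 X4.
  rewrite /attn_out; apply: out_lin => h; apply: col_lin => j; exact: hser.
have mem : forall X, Xs R X -> (`|Htgt R 1 X - attn_out ty M 1 X|%:E <= sup_err ty M (Xs R) (Htgt R))%E.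
  move=> X XX; apply: ereal_sup_ubound; exists 1 => //; exists X => //.
case: (lerP (2/3) `|Htgt R 1 X2 - attn_out ty M 1 X2|) => h2.
  by apply: le_trans (mem _ m2); rewrite lee_fin.
case: (lerP (2/3) `|Htgt R 1 X3 - attn_out ty M 1 X3|) => h3.
  by apply: le_trans (mem _ m3); rewrite lee_fin.
case: (lerP (2/3) `|Htgt R 1 X4 - attn_out ty M 1 X4|) => h4.
  by apply: le_trans (mem _ m4); rewrite lee_fin.
apply: le_trans (mem X1 m1).
rewrite lee_fin hout v1.
move: h2 h3 h4; rewrite v2 v3 v4.
move: (attn_out ty M 1 X2) (attn_out ty M 1 X3) (attn_out ty M 1 X4) => o2 o3 o4.
rewrite !ltr_norml => /andP[a2 b2] /andP[a3 b3] /andP[a4 b4].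
apply: le_trans _ (ler_norm _); exact: fin_ineq a2 b2 a3 b3 a4 b4.
Qed.

Definition i1 : 'I_3 := @Ordinal 3 1 isT.
Definition i2 : 'I_3 := @Ordinal 3 2 isT.

Definition vcoef (R : realType) ty : R := 6 / ((expR 1 - 1) * rpe_weight ty 1 1).

Definition Mdp (R : realType) ty : attn_model R 3 2 := {|
  am_D := 3;
  am_WE := 1%:M;
  am_bE := 0;
  am_WO := vcoef R ty *: delta_mx 0 0;
  am_WV := fun h => (if val h == 0%N then 1 else -1) *: delta_mx 0 0;
  am_r := fun _ => 1%N;
  am_WQ := fun h => (if val h == 0%N then 2 else 0) *: delta_mx 0 i1;
  am_WK := fun h => delta_mx 0 i2;
  am_p := fun _ => 1;
  am_p_pos := fun _ => ltr01 |}.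

Lemma Mdp_term (R : realType) ty h t (X : int -> 'cV[R]_3) j s :
  attn_term ty (Mdp R ty) h t X j s =
  X (t - s%:Z) j 0 * expR ((if val h == 0%N then 2 else 0) * X t i1 0 * X (t - s%:Z) i2 0)
  * rpe_weight ty 1 s.
Proof.
rewrite /attn_term /embed /= !mul1mx !addr0 big_ord1.
by rewrite -scalemxAl mxE delta_mulE delta_mulE.
Qed.

Lemma mkX_far (R : realType) b1 b2 (t : int) (s : nat) :
  (`|t|%N + 2 <= s)%N -> forall i, mkX R b1 b2 (t - s%:Z) i 0 = 0.
Proof.
move=> hs i; rewrite !mxE /xv.
have -> : (t - s%:Z == 0) = false by apply/negbTE/eqP; lia.
have -> : (t - s%:Z == 1) = false by apply/negbTE/eqP; lia.
by [].
Qed.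

Lemma Mdp_defined (R : realType) ty : attn_defined ty (Mdp R ty) (Xs R).
Proof.
move=> X [b1 [b2 ->]] t h j.
apply: (cvgP _ (series_ev0 _ _ (`|t|%N + 2) _)) => s hs.
by rewrite Mdp_term mkX_far // !mul0r.
Qed.

Lemma out_alg (R : realType) (v : R) (c : 'I_2 -> 'cV[R]_3) :
  (v *: (delta_mx 0 0 : 'M[R]_(1,3)) *m \sum_h ((if val h == 0%N then 1 else -1) *: (delta_mx 0 0 : 'M[R]_3) *m c h)) 0 0
  = v * (c ord0 0 0 - c (lift ord0 ord0) 0 0).
Proof.
rewrite -scalemxAl mxE delta_mulE summxE big_ord_recl big_ord1 -!scalemxAl.
rewrite [(_ *: (_ *m c ord0)) _ _]mxE [(_ *: (_ *m c _)) _ _]mxE.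
by rewrite !delta_mulE /= mul1r mulN1r.
Qed.

Lemma col_entry (R : realType) n (f : 'I_n -> R) j : (\col_i f i) j 0 = f j.
Proof. by rewrite mxE. Qed.


Lemma Mdp_out (R : realType) ty t X :
  attn_out ty (Mdp R ty) t X = vcoef R ty *
    (limn (series (attn_term ty (Mdp R ty) ord0 t X ord0)) -
     limn (series (attn_term ty (Mdp R ty) (lift ord0 ord0) t X ord0))).
Proof.
rewrite /attn_out [am_WO _]/= [am_WV _]/=.
rewrite out_alg.
rewrite [X in _ * (X - _)]mxE.
rewrite [X in _ * (_ - X)]mxE.
by [].
Qed.

Lemma Mdp_diff (R : realType) ty b1 b2 t s :
  attn_term ty (Mdp R ty) ord0 t (mkX R b1 b2) ord0 s -
  attn_term ty (Mdp R ty) (lift ord0 ord0) t (mkX R b1 b2) ord0 s =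
  if s == 1%N then (if (t == 1) && b1 && b2 then 1/2 * (expR 1 - 1) * rpe_weight ty 1 1 else 0)
  else 0.
Proof.
rewrite !Mdp_term.
rewrite (_ : (val (lift ord0 ord0 : 'I_2) == 0%N) = false) //.
rewrite (_ : (val (ord0 : 'I_2) == 0%N) = true) //.
rewrite !mul0r expR0 mulr1 !mxE /xv /=.
have [->|t1] := eqVneq t 1.
  have [->|s1] := eqVneq s 1%N.
    rewrite subrr eqxx /=.
    case: b1; case: b2 => /=; rewrite ?mulr0 ?mul0r ?expR0 ?mulr1 ?subrr //.
    rewrite (_ : 2 * (1 / 2) = 1 :> R); last by lra.
    by rewrite mulrBr mulrBl mulr1.
  have h0 : (1 - s%:Z == 0) = false by apply/negbTE/eqP; move/eqP: s1; lia.
  rewrite h0 /=.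
  by case: (1 - s%:Z == 1) => /=; rewrite ?andbF /= !mul0r subrr.
rewrite /=.
have -> : (if t == 0 then 0 else 0) = 0 :> R by case: (t == 0).
by rewrite mulr0 mul0r expR0 mulr1 subrr; case: (s == 1%N).
Qed.

Lemma w1_neq0 (R : realType) ty : rpe_weight ty (1 : R) 1 != 0.
Proof. by case: ty; rewrite /rpe_weight /=; apply: lt0r_neq0; exact: expR_gt0. Qed.

Lemma vcoefE (R : realType) ty : vcoef R ty * (1 / 2 * (expR 1 - 1) * rpe_weight ty 1 1) = 3.
Proof.
have he : expR 1 - 1 != 0 :> R.
  by rewrite subr_eq0 gt_eqF // expR_gt1.
have hw := w1_neq0 R ty.
rewrite /vcoef; field.
by rewrite he hw.
Qed.

Lemma Mdp_exact (R : realType) ty b1 b2 t :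
  attn_out ty (Mdp R ty) t (mkX R b1 b2) = Htgt R t (mkX R b1 b2).
Proof.
rewrite Mdp_out.
rewrite (limn_ev0 _ _ (`|t|%N + 2)); last by move=> s hs; rewrite Mdp_term mkX_far // !mul0r.
rewrite (limn_ev0 _ _ (`|t|%N + 2)); last by move=> s hs; rewrite Mdp_term mkX_far // !mul0r.
rewrite -sumrB.
under eq_bigr do rewrite Mdp_diff.
have lt1 : (1 < `|t|%N + 2)%N by rewrite addn2.
rewrite (bigD1 (Ordinal lt1)) //= big1 ?addr0; last first.
  move=> i hi; rewrite (_ : (nat_of_ord i == 1%N) = false) //.
  apply/negbTE; apply: contra hi => /eqP h; apply/eqP; exact: val_inj.
rewrite /Htgt ftgtE !mxE /xv /=.
have [->|t1] := eqVneq t 1.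
  rewrite subrr /=.
  case: b1; case: b2 => /=; rewrite ?mulr0.
  - rewrite vcoefE relu_ge0; lra.
  - rewrite relu_le0; lra.
  - rewrite relu_le0; lra.
  - rewrite relu_le0; lra.
have -> : (t - 1 == 0) = false by apply/negbTE/eqP; move/eqP: t1; lia.
rewrite /= andbF !if_same mulr0 relu_le0 ?mulr0 //; lra.
Qed.

Theorem proposition4p2 (R : realType) (ty : rpe_type) :
  exists (d : nat) (Xs : set (int -> 'cV[R]_d))
         (Htgt : int -> (int -> 'cV[R]_d) -> R),
    input_set Xs /\ adap11 Xs Htgt /\
    (forall eps : R, 0 < eps ->
       exists H : nat, (0 < H)%N /\
       exists M : attn_model R d H,
         attn_defined ty M Xs /\ (sup_err ty M Xs Htgt <= eps%:E)%E) /\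
    (forall H : nat, (0 < H)%N ->
       forall M : attn_model R d H, dot_product_free M ->
         attn_defined ty M Xs ->
         ((2 / 3 : R)%:E <= sup_err ty M Xs Htgt)%E).
Proof.
exists 3%N, (Xs R), (Htgt R).
split; first exact: Xs_input.
split; first exact: Xs_adap.
split.
  move=> eps eps0; exists 2%N; split => //; exists (Mdp R ty); split.
    exact: Mdp_defined.
  apply: ge_ereal_sup => y [t _ [X [b1 [b2 ->]] <-]].
  by rewrite Mdp_exact subrr normr0 lee_fin ltW.
move=> H _ M dpf def; exact: dpf_bound.
Qed.
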